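(* Let $(S_H,\rho_{S_H})$ be the unit sphere of a real Hilbert space $H$ with spherical metric $\rho_{S_H}(x,y)=\arccos\langle x,y\rangle$. Let $r,\delta$ be real numbers with $\pi/8<r<\pi/4$, $0<\delta<1$ and $\cos(\pi/8)\le\cos^2(\delta\pi/8)$. Let $p\in S_H$, $A=\{p\}$, $B=S_{\delta\pi/8}[p]$, $C=S_{\pi/8}[p]$, $X=S_r[p]$ (with metric $d$ the restriction of $\rho_{S_H}$), and let $P_A,P_B$ be the metric projections of $X$ onto $A$ and $B$. Define $T\colon X\to X$ by $Tx=P_Ax$ if $x\in C$ and $Tx=P_Bx$ if $x\in X\setminus C$. Then $X$ is an admissible complete CAT(1) space and $T$ is a spherically nonspreading mapping of $X$ into itself, i.e. $\cos^2 d(Tx,Ty)\ge \cos d(Tx,y)\cos d(Ty,x)$ for all $x,y\in X$.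
   Context: $S_\rho[q]$ denotes the closed ball of radius $\rho$ centered at $q$ in $(S_H,\rho_{S_H})$. The metric projection $P_K$ of $X$ onto a nonempty closed convex set $K\subset X$ sends $x$ to the unique nearest point of $K$ to $x$. A CAT(1) space is a $\pi$-geodesic metric space whose geodesic triangles of perimeter $<2\pi$ satisfy the CAT(1) comparison inequality with respect to comparison triangles in the unit 2-sphere; it is admissible if $d(v,v')<\pi/2$ for all $v,v'$. *)

(* Defs.v *)
From Stdlib Require Import Reals Lra.
Open Scope R_scope.

Definition is_real_vector_space {V : Type} (zero : V) (add : V -> V -> V)
  (opp : V -> V) (scal : R -> V -> V) : Prop :=
  (forall x y z, add x (add y z) = add (add x y) z) /\
  (forall x y, add x y = add y x) /\
  (forall x, add x zero = x) /\
  (forall x, add x (opp x) = zero) /\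
  (forall a b x, scal a (scal b x) = scal (a * b) x) /\
  (forall x, scal 1 x = x) /\
  (forall a x y, scal a (add x y) = add (scal a x) (scal a y)) /\
  (forall a b x, scal (a + b) x = add (scal a x) (scal b x)).

Definition is_inner_product {V : Type} (zero : V) (add : V -> V -> V)
  (scal : R -> V -> V) (inner : V -> V -> R) : Prop :=
  (forall x y, inner x y = inner y x) /\
  (forall x y z, inner (add x y) z = inner x z + inner y z) /\
  (forall a x y, inner (scal a x) y = a * inner x y) /\
  (forall x, 0 <= inner x x) /\
  (forall x, inner x x = 0 -> x = zero).

Definition hnorm_dist {V : Type} (add : V -> V -> V) (opp : V -> V)
  (inner : V -> V -> R) (x y : V) : R :=
  sqrt (inner (add x (opp y)) (add x (opp y))).

Definition is_real_hilbert_space {V : Type} (zero : V) (add : V -> V -> V)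
  (opp : V -> V) (scal : R -> V -> V) (inner : V -> V -> R) : Prop :=
  is_real_vector_space zero add opp scal /\
  is_inner_product zero add scal inner /\
  (forall u : nat -> V,
     (forall eps, eps > 0 -> exists N, forall m n, (m >= N)%nat -> (n >= N)%nat ->
        hnorm_dist add opp inner (u m) (u n) < eps) ->
     exists l, forall eps, eps > 0 -> exists N, forall n, (n >= N)%nat ->
        hnorm_dist add opp inner (u n) l < eps).

Definition unit_sphere {V : Type} (inner : V -> V -> R) (x : V) : Prop :=
  inner x x = 1.

Definition sph_dist {V : Type} (inner : V -> V -> R) (x y : V) : R :=
  acos (inner x y).

Definition sph_ball {V : Type} (inner : V -> V -> R) (q : V) (rho : R) (x : V) : Prop :=
  unit_sphere inner x /\ sph_dist inner q x <= rho.

Definition is_metric_on {M : Type} (X : M -> Prop) (d : M -> M -> R) : Prop :=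
  (forall x y, X x -> X y -> 0 <= d x y) /\
  (forall x y, X x -> X y -> d x y = 0 <-> x = y) /\
  (forall x y, X x -> X y -> d x y = d y x) /\
  (forall x y z, X x -> X y -> X z -> d x z <= d x y + d y z).

Definition is_geodesic {M : Type} (X : M -> Prop) (d : M -> M -> R)
  (x y : M) (gamma : R -> M) : Prop :=
  gamma 0 = x /\ gamma (d x y) = y /\
  (forall t, 0 <= t <= d x y -> X (gamma t)) /\
  (forall s t, 0 <= s <= d x y -> 0 <= t <= d x y ->
     d (gamma s) (gamma t) = Rabs (s - t)).

Definition pi_geodesic {M : Type} (X : M -> Prop) (d : M -> M -> R) : Prop :=
  forall x y, X x -> X y -> d x y < PI -> exists gamma, is_geodesic X d x y gamma.

Definition R3 := (R * R * R)%type.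
Definition dot3 (u v : R3) : R :=
  let '(u1, u2, u3) := u in let '(v1, v2, v3) := v in u1 * v1 + u2 * v2 + u3 * v3.
Definition S2 (u : R3) : Prop := dot3 u u = 1.
Definition dS2 (u v : R3) : R := acos (dot3 u v).

(** A point on the side gij at parameter s has as
    comparison point the point p' of S^2 with dS2 yi p' = s and
    dS2 p' yj = d xi xj - s (unique since the side has length < pi). *)

Definition cmp_point (yi yj p' : R3) (s len : R) : Prop :=
  S2 p' /\ dS2 yi p' = s /\ dS2 p' yj = len - s.

Definition on_side {M : Type} (d : M -> M -> R) (xi xj : M) (g : R -> M)
  (yi yj : R3) (p : M) (p' : R3) : Prop :=
  exists s, 0 <= s <= d xi xj /\ p = g s /\ cmp_point yi yj p' s (d xi xj).

Definition on_triangle {M : Type} (d : M -> M -> R) (x1 x2 x3 : M)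
  (g12 g23 g31 : R -> M) (y1 y2 y3 : R3) (p : M) (p' : R3) : Prop :=
  on_side d x1 x2 g12 y1 y2 p p' \/
  on_side d x2 x3 g23 y2 y3 p p' \/
  on_side d x3 x1 g31 y3 y1 p p'.

Definition CAT1_inequality {M : Type} (X : M -> Prop) (d : M -> M -> R) : Prop :=
  forall (x1 x2 x3 : M) (g12 g23 g31 : R -> M) (y1 y2 y3 : R3),
    X x1 -> X x2 -> X x3 ->
    is_geodesic X d x1 x2 g12 -> is_geodesic X d x2 x3 g23 ->
    is_geodesic X d x3 x1 g31 ->
    d x1 x2 + d x2 x3 + d x3 x1 < 2 * PI ->
    S2 y1 -> S2 y2 -> S2 y3 ->
    dS2 y1 y2 = d x1 x2 -> dS2 y2 y3 = d x2 x3 -> dS2 y3 y1 = d x3 x1 ->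
    forall p q p' q',
      on_triangle d x1 x2 x3 g12 g23 g31 y1 y2 y3 p p' ->
      on_triangle d x1 x2 x3 g12 g23 g31 y1 y2 y3 q q' ->
      d p q <= dS2 p' q'.

Definition is_CAT1_space {M : Type} (X : M -> Prop) (d : M -> M -> R) : Prop :=
  is_metric_on X d /\ pi_geodesic X d /\ CAT1_inequality X d.

Definition admissible {M : Type} (X : M -> Prop) (d : M -> M -> R) : Prop :=
  forall v v', X v -> X v' -> d v v' < PI / 2.

Definition complete_metric {M : Type} (X : M -> Prop) (d : M -> M -> R) : Prop :=
  forall u : nat -> M, (forall n, X (u n)) ->
    (forall eps, eps > 0 -> exists N, forall m n, (m >= N)%nat -> (n >= N)%nat ->
        d (u m) (u n) < eps) ->
    exists l, X l /\ forall eps, eps > 0 -> exists N, forall n, (n >= N)%nat ->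
        d (u n) l < eps.

Definition is_metric_projection {M : Type} (X K : M -> Prop) (d : M -> M -> R)
  (P : M -> M) : Prop :=
  forall x, X x -> K (P x) /\ forall k, K k -> d x (P x) <= d x k.

Definition spherically_nonspreading {M : Type} (X : M -> Prop) (d : M -> M -> R)
  (T : M -> M) : Prop :=
  forall x y, X x -> X y ->
    (cos (d (T x) (T y)))^2 >= cos (d (T x) y) * cos (d (T y) x).

(* Main.v *)
Require Import Defs.
From Stdlib Require Import Reals Lra Psatz Classical.
Open Scope R_scope.


Record IPS := mkIPS {
  car :> Type; z0 : car; ad : car -> car -> car; op : car -> car;
  sc : R -> car -> car; ip : car -> car -> R;
  vs_ax : is_real_vector_space z0 ad op sc;
  ip_ax : is_inner_product z0 ad sc ip }.
Arguments z0 {i}. Arguments ad {i} _ _. Arguments op {i} _.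
Arguments sc {i} _ _. Arguments ip {i} _ _.

Definition lc {E : IPS} (a : R) (x : E) (b : R) (y : E) : E := ad (sc a x) (sc b y).
Definition unit {E : IPS} (x : E) := ip x x = 1.


Lemma ip_sym (E : IPS) (x y : E) : ip x y = ip y x.
Proof. destruct (ip_ax E) as [H _]; apply H. Qed.
Lemma ip_addl (E : IPS) (x y z : E) : ip (ad x y) z = ip x z + ip y z.
Proof. destruct (ip_ax E) as [_ [H _]]; apply H. Qed.
Lemma ip_scl (E : IPS) a (x y : E) : ip (sc a x) y = a * ip x y.
Proof. destruct (ip_ax E) as [_ [_ [H _]]]; apply H. Qed.
Lemma ip_pos (E : IPS) (x : E) : 0 <= ip x x.
Proof. destruct (ip_ax E) as [_ [_ [_ [H _]]]]; apply H. Qed.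
Lemma ip_def (E : IPS) (x : E) : ip x x = 0 -> x = z0.
Proof. destruct (ip_ax E) as [_ [_ [_ [_ H]]]]; apply H. Qed.

Lemma ad_assoc (E : IPS) (x y z : E) : ad x (ad y z) = ad (ad x y) z.
Proof. destruct (vs_ax E) as [H _]; apply H. Qed.
Lemma ad_comm (E : IPS) (x y : E) : ad x y = ad y x.
Proof. destruct (vs_ax E) as [_ [H _]]; apply H. Qed.
Lemma ad_0 (E : IPS) (x : E) : ad x z0 = x.
Proof. destruct (vs_ax E) as [_ [_ [H _]]]; apply H. Qed.
Lemma ad_opp (E : IPS) (x : E) : ad x (op x) = z0.
Proof. destruct (vs_ax E) as [_ [_ [_ [H _]]]]; apply H. Qed.
Lemma sc_1 (E : IPS) (x : E) : sc 1 x = x.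
Proof. destruct (vs_ax E) as [_ [_ [_ [_ [_ [H _]]]]]]; apply H. Qed.
Lemma sc_addr (E : IPS) a b (x : E) : sc (a + b) x = ad (sc a x) (sc b x).
Proof. destruct (vs_ax E) as [_ [_ [_ [_ [_ [_ [_ H]]]]]]]; apply H. Qed.

Lemma sc_0 (E : IPS) (x : E) : sc 0 x = z0.
Proof.
  set (w := sc 0 x).
  assert (Hw : ad w w = w) by (unfold w; rewrite <- sc_addr; f_equal; ring).
  rewrite <- (ad_opp E w). rewrite <- Hw at 2. rewrite <- ad_assoc, ad_opp, ad_0. reflexivity.
Qed.

Lemma sc_m1 (E : IPS) (x : E) : sc (-1) x = op x.
Proof.
  assert (H : ad x (sc (-1) x) = z0).
  { rewrite <- (sc_1 E x) at 1. rewrite <- sc_addr. replace (1 + -1) with 0 by ring. apply sc_0. }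
  rewrite <- (ad_0 E (sc (-1) x)). rewrite <- (ad_opp E x).
  rewrite ad_assoc. rewrite (ad_comm E (sc (-1) x) x), H.
  rewrite ad_comm; apply ad_0.
Qed.

Lemma ip_addr (E : IPS) (x y z : E) : ip z (ad x y) = ip z x + ip z y.
Proof. rewrite !(ip_sym E z); apply ip_addl. Qed.
Lemma ip_scr (E : IPS) a (x y : E) : ip y (sc a x) = a * ip y x.
Proof. rewrite !(ip_sym E y); apply ip_scl. Qed.

Lemma ip_lcl (E : IPS) a (x : E) b y z : ip (lc a x b y) z = a * ip x z + b * ip y z.
Proof. unfold lc; rewrite ip_addl, !ip_scl; ring. Qed.
Lemma ip_lcr (E : IPS) a (x : E) b y z : ip z (lc a x b y) = a * ip z x + b * ip z y.
Proof. unfold lc; rewrite ip_addr, !ip_scr; ring. Qed.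

Lemma lc_10 (E : IPS) (x y : E) : lc 1 x 0 y = x.
Proof. unfold lc; rewrite sc_1, sc_0, ad_0; reflexivity. Qed.

Lemma eq_of_ip (E : IPS) (x y : E) : ip x x - 2 * ip x y + ip y y = 0 -> x = y.
Proof.
  intro H.
  assert (Hz : lc 1 x (-1) y = z0).
  { apply ip_def. rewrite ip_lcl, !ip_lcr. rewrite (ip_sym E y x). lra. }
  unfold lc in Hz. rewrite sc_1, sc_m1 in Hz.
  rewrite <- (ad_0 E x). rewrite <- (ad_opp E y). rewrite (ad_comm E y), ad_assoc, Hz.
  rewrite ad_comm; apply ad_0.
Qed.

Lemma CS (E : IPS) (u v : E) : (ip u v)^2 <= ip u u * ip v v.
Proof.
  destruct (Req_dec (ip v v) 0) as [H0|H0].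
  - apply ip_def in H0; subst v.
    assert (ip u z0 = 0).
    { rewrite <- (sc_0 E u), ip_scr; ring. }
    rewrite H. pose proof (ip_pos E u). pose proof (ip_pos E z0). simpl. nra.
  - pose proof (ip_pos E v). pose proof (ip_pos E u).
    set (t := ip u v / ip v v).
    pose proof (ip_pos E (lc 1 u (-t) v)) as Hp.
    rewrite ip_lcl, !ip_lcr, (ip_sym E v u) in Hp.
    assert (Hvv : 0 < ip v v) by lra.
    unfold t in Hp.
    assert (Heq : 1 * (1 * ip u u + - (ip u v / ip v v) * ip u v) +
       - (ip u v / ip v v) * (1 * ip u v + - (ip u v / ip v v) * ip v v)
       = ip u u - (ip u v)^2 / ip v v) by (field; lra).
    rewrite Heq in Hp.
    apply Rmult_le_reg_r with (/ ip v v). apply Rinv_0_lt_compat; lra.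
    replace (ip u u * ip v v * / ip v v) with (ip u u) by (field; lra).
    unfold Rdiv in Hp; lra.
Qed.

Lemma unit_bound (E : IPS) (x y : E) : unit x -> unit y -> -1 <= ip x y <= 1.
Proof. unfold unit; intros Hx Hy. pose proof (CS E x y). rewrite Hx, Hy in H. nra. Qed.

Lemma uniq_lc (E : IPS) (x y z : E) a b :
  unit x -> unit y -> unit z ->
  ip z x = a + b * ip x y -> ip z y = a * ip x y + b ->
  a * (a + b * ip x y) + b * (a * ip x y + b) = 1 ->
  z = lc a x b y.
Proof.
  unfold unit; intros Hx Hy Hz H1 H2 H3.
  apply eq_of_ip. rewrite !ip_lcr, !ip_lcl, H1, H2, Hz, Hx, Hy, (ip_sym E y x).
  rewrite (ip_sym E x y) in *. nra.
Qed.

Lemma acos_le (u t : R) : -1 <= u <= 1 -> 0 <= t <= PI -> cos t <= u -> acos u <= t.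
Proof.
  intros Hu Ht Hc. destruct (Rle_dec (acos u) t) as [|Hn]; auto.
  pose proof (acos_bound u).
  assert (cos (acos u) < cos t) by (apply cos_decreasing_1; lra).
  rewrite cos_acos in H0; lra.
Qed.
Lemma acos_lt (u t : R) : -1 <= u <= 1 -> 0 <= t <= PI -> cos t < u -> acos u < t.
Proof.
  intros Hu Ht Hc. destruct (Rlt_dec (acos u) t) as [|Hn]; auto.
  pose proof (acos_bound u).
  destruct (Req_dec (acos u) t) as [He|He].
  - rewrite <- He, cos_acos in Hc; lra.
  - assert (cos (acos u) < cos t) by (apply cos_decreasing_1; lra).
    rewrite cos_acos in H0; lra.
Qed.
Lemma acos_ge (u t : R) : -1 <= u <= 1 -> 0 <= t <= PI -> u <= cos t -> t <= acos u.
Proof.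
  intros Hu Ht Hc. destruct (Rle_dec t (acos u)) as [|Hn]; auto.
  pose proof (acos_bound u).
  assert (cos t < cos (acos u)) by (apply cos_decreasing_1; lra).
  rewrite cos_acos in H0; lra.
Qed.
Lemma acos_gt (u t : R) : -1 <= u <= 1 -> 0 <= t <= PI -> u < cos t -> t < acos u.
Proof.
  intros Hu Ht Hc. destruct (Rlt_dec t (acos u)) as [|Hn]; auto.
  pose proof (acos_bound u).
  destruct (Req_dec (acos u) t) as [He|He].
  - rewrite <- He, cos_acos in Hc; lra.
  - assert (cos t < cos (acos u)) by (apply cos_decreasing_1; lra).
    rewrite cos_acos in H0; lra.
Qed.

Lemma acos_eq_iff (u t : R) : -1 <= u <= 1 -> 0 <= t <= PI -> (acos u = t <-> u = cos t).
Proof.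
  intros Hu Ht; split; intro H.
  - rewrite <- H, cos_acos; auto.
  - rewrite H; apply acos_cos; auto.
Qed.

Lemma sin_sq (t : R) : sin t ^ 2 = 1 - cos t ^ 2.
Proof. pose proof (sin2_cos2 t). unfold Rsqr in H. lra. Qed.

Lemma sdist0 (E : IPS) (x y : E) : unit x -> unit y -> acos (ip x y) = 0 -> x = y.
Proof.
  intros Hx Hy H. pose proof (unit_bound E x y Hx Hy).
  apply acos_eq_iff in H; [|auto| pose proof PI_RGT_0; lra]. rewrite cos_0 in H.
  apply eq_of_ip. unfold unit in *. rewrite Hx, Hy, H; ring.
Qed.

Lemma sdist_refl (E : IPS) (x : E) : unit x -> acos (ip x x) = 0.
Proof. unfold unit; intro H; rewrite H; apply acos_1. Qed.

Lemma tri (E : IPS) (x y z : E) : unit x -> unit y -> unit z ->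
  acos (ip x z) <= acos (ip x y) + acos (ip y z).
Proof.
  intros Hx Hy Hz.
  pose proof (unit_bound E x y Hx Hy). pose proof (unit_bound E y z Hy Hz).
  pose proof (unit_bound E x z Hx Hz).
  set (a := acos (ip x y)). set (b := acos (ip y z)).
  pose proof (acos_bound (ip x y)). pose proof (acos_bound (ip y z)).
  pose proof (acos_bound (ip x z)).
  destruct (Rle_dec PI (a + b)). { unfold a, b in *; lra. }
  apply acos_le; auto. unfold a, b in *; lra.
  rewrite cos_plus. fold a b.
  assert (ca : cos a = ip x y) by (apply cos_acos; auto).
  assert (cb : cos b = ip y z) by (apply cos_acos; auto).
  assert (sa : 0 <= sin a) by (apply sin_ge_0; unfold a; lra).
  assert (sb : 0 <= sin b) by (apply sin_ge_0; unfold b; lra).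
  pose proof (sin_sq a) as Sa. pose proof (sin_sq b) as Sb.
  pose proof (CS E (lc 1 x (- ip x y) y) (lc 1 z (- ip y z) y)) as C.
  rewrite !ip_lcl, !ip_lcr in C. unfold unit in *.
  rewrite ?(ip_sym E y x), ?(ip_sym E z y), ?(ip_sym E z x), Hx, Hy, Hz in C.
  rewrite ca, cb.
  assert (Hc: (ip x z - ip x y * ip y z)^2 <= (sin a * sin b)^2).
  { rewrite Rpow_mult_distr, Sa, Sb, ca, cb. nra. }
  assert (0 <= sin a * sin b) by nra.
  nra.
Qed.

Definition ca (L t : R) := if Req_EM_T L 0 then 1 else sin (L - t) / sin L.
Definition cb (L t : R) := if Req_EM_T L 0 then 0 else sin t / sin L.

Lemma coef (L t : R) : 0 <= t <= L -> L < PI ->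
  ca L t + cb L t * cos L = cos t /\ ca L t * cos L + cb L t = cos (L - t) /\
  ca L t * cos t + cb L t * cos (L - t) = 1 /\ 0 <= ca L t /\ 0 <= cb L t.
Proof.
  intros Ht HL. unfold ca, cb. destruct (Req_EM_T L 0) as [E|E].
  - subst. assert (t = 0) by lra. subst. rewrite Rminus_0_r, cos_0. lra.
  - assert (sL : 0 < sin L) by (apply sin_gt_0; lra).
    assert (0 <= sin (L - t)) by (apply sin_ge_0; lra).
    assert (0 <= sin t) by (apply sin_ge_0; lra).
    rewrite sin_minus, cos_minus. pose proof (sin_sq L). pose proof (sin_sq t).
    repeat split.
    + field_simplify; [|lra]. apply Rmult_eq_reg_r with (sin L); [|lra]. field_simplify; lra || (unfold Rdiv; field_simplify; nra).
    + field_simplify; [|lra]. apply Rmult_eq_reg_r with (sin L); [|lra]. field_simplify; nra.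
    + field_simplify; [|lra]. apply Rmult_eq_reg_r with (sin L); [|lra]. field_simplify; nra.
    + rewrite <- sin_minus. apply Rmult_le_pos; auto. left; apply Rinv_0_lt_compat; auto.
    + apply Rmult_le_pos; auto. left; apply Rinv_0_lt_compat; auto.
Qed.

Lemma coef2 (L s t : R) : 0 <= t <= L -> 0 <= s <= L -> L < PI ->
  ca L t * cos s + cb L t * cos (L - s) = cos (s - t).
Proof.
  intros Ht Hs HL. unfold ca, cb. destruct (Req_EM_T L 0) as [E|E].
  - subst. assert (t = 0) by lra. assert (s = 0) by lra. subst.
    rewrite !Rminus_0_r, cos_0. lra.
  - assert (sL : 0 < sin L) by (apply sin_gt_0; lra).
    rewrite !sin_minus, !cos_minus. pose proof (sin_sq L). pose proof (sin_sq t).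
    apply Rmult_eq_reg_r with (sin L); [|lra]. field_simplify; [|lra]. nra.
Qed.

Lemma ca0 L : L < PI -> 0 <= L -> ca L 0 = 1 /\ cb L 0 = 0.
Proof. intros. unfold ca, cb. destruct (Req_EM_T L 0); [lra|].
  rewrite sin_0, Rminus_0_r. assert (0 < sin L) by (apply sin_gt_0; lra). split; field; lra. Qed.
Lemma caL L : L < PI -> 0 <= L -> ca L L = 0 /\ cb L L = 1 \/ L = 0.
Proof. intros. unfold ca, cb. destruct (Req_EM_T L 0); [lra|].
  rewrite Rminus_diag, sin_0. assert (0 < sin L) by (apply sin_gt_0; lra). left; split; field; lra. Qed.

Lemma lc_01 (E : IPS) (x y : E) : lc 0 x 1 y = y.
Proof. unfold lc; rewrite sc_1, sc_0, ad_comm, ad_0; reflexivity. Qed.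

Definition geo {E : IPS} (x y : E) (L t : R) : E := lc (ca L t) x (cb L t) y.

Lemma acos_cos_abs (u : R) : -PI <= u <= PI -> acos (cos u) = Rabs u.
Proof.
  intros. unfold Rabs; destruct (Rcase_abs u).
  - rewrite <- cos_neg. apply acos_cos; lra.
  - apply acos_cos; lra.
Qed.

Lemma geo_props (E : IPS) (x y : E) L : unit x -> unit y -> ip x y = cos L -> 0 <= L < PI ->
  geo x y L 0 = x /\ geo x y L L = y /\
  (forall t, 0 <= t <= L -> unit (geo x y L t) /\ ip (geo x y L t) x = cos t /\
      ip (geo x y L t) y = cos (L - t)) /\
  (forall s t, 0 <= s <= L -> 0 <= t <= L -> acos (ip (geo x y L s) (geo x y L t)) = Rabs (s - t)).
Proof.
  intros Hx Hy Hk HL.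
  assert (Hgt : forall t, 0 <= t <= L -> ip (geo x y L t) x = cos t /\ ip (geo x y L t) y = cos (L - t)).
  { intros t Ht. destruct (coef L t Ht (proj2 HL)) as [C1 [C2 _]]. unfold geo.
    rewrite !ip_lcl. unfold unit in *. rewrite Hx, Hy, (ip_sym E y x), Hk. lra. }
  split; [|split; [|split]].
  - unfold geo. destruct (ca0 L) as [-> ->]; try lra. apply lc_10.
  - unfold geo. destruct (caL L) as [[-> ->]| ->]; try lra. apply lc_01.
    destruct (ca0 0) as [-> ->]; try lra. rewrite lc_10.
    apply eq_of_ip. unfold unit in *. rewrite cos_0 in Hk. rewrite Hx, Hk, Hy; ring.
  - intros t Ht. destruct (Hgt t Ht) as [G1 G2]. split; auto.
    destruct (coef L t Ht (proj2 HL)) as [C1 [C2 [C3 _]]]. unfold unit.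
    unfold geo at 2. rewrite ip_lcr. fold (geo x y L t). rewrite G1, G2. exact C3.
  - intros s t Hs Ht. destruct (Hgt s Hs) as [G1 G2].
    unfold geo at 2. rewrite ip_lcr. fold (geo x y L s). rewrite G1, G2.
    rewrite coef2 by lra. apply acos_cos_abs. lra.
Qed.

Lemma side_repr (E : IPS) (x y z : E) L s : unit x -> unit y -> unit z ->
  ip x y = cos L -> 0 <= s <= L -> L < PI ->
  ip x z = cos s -> ip z y = cos (L - s) -> z = lc (ca L s) x (cb L s) y.
Proof.
  intros Hx Hy Hz Hk Hs HL H1 H2.
  destruct (coef L s Hs HL) as [C1 [C2 [C3 _]]].
  apply uniq_lc; auto; rewrite ?Hk. all: try rewrite (ip_sym E z x). all: try lra. rewrite C1, C2; exact C3.
Qed.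

Definition add3 (u v : R3) : R3 :=
  let '(u1, u2, u3) := u in let '(v1, v2, v3) := v in (u1 + v1, u2 + v2, u3 + v3).
Definition opp3 (u : R3) : R3 := let '(u1, u2, u3) := u in (-u1, -u2, -u3).
Definition scal3 (a : R) (u : R3) : R3 := let '(u1, u2, u3) := u in (a*u1, a*u2, a*u3).
Definition zero3 : R3 := (0, 0, 0).

Lemma vs3 : is_real_vector_space zero3 add3 opp3 scal3.
Proof.
  repeat split; intros; repeat match goal with u : R3 |- _ => destruct u as [[? ?] ?] end;
  simpl; try (apply (f_equal2 pair); [apply (f_equal2 pair)|]; ring).
Qed.
Lemma ip3 : is_inner_product zero3 add3 scal3 dot3.
Proof.
  repeat split; intros; repeat match goal with u : R3 |- _ => destruct u as [[? ?] ?] end;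
  simpl in *; try ring; try nra.
  unfold zero3. assert (r = 0) by nra. assert (r0 = 0) by nra. assert (r1 = 0) by nra. subst; reflexivity.
Qed.
Definition E3 : IPS := mkIPS R3 zero3 add3 opp3 scal3 dot3 vs3 ip3.

Definition ballE {E : IPS} (p : E) (r : R) (x : E) : Prop := unit x /\ acos (ip p x) <= r.
Definition dE {E : IPS} (x y : E) : R := acos (ip x y).

Lemma cos_of_acos_le (u t : R) : -1 <= u <= 1 -> t <= PI -> acos u <= t -> cos t <= u.
Proof.
  intros Hu Ht H. destruct (Rle_dec (cos t) u) as [|Hn]; auto.
  destruct (Rle_dec 0 t).
  - assert (t < acos u) by (apply acos_gt; lra). lra.
  - pose proof (acos_bound u). lra.
Qed.

Lemma metric_ok (E : IPS) (p : E) r : is_metric_on (ballE p r) dE.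
Proof.
  unfold dE, ballE. split; [|split; [|split]].
  - intros; apply acos_bound.
  - intros x y [Hx _] [Hy _]; split. intro H. apply sdist0; auto.
    intros ->. apply sdist_refl; auto.
  - intros x y _ _. rewrite ip_sym; reflexivity.
  - intros x y z [Hx _] [Hy _] [Hz _]. apply tri; auto.
Qed.

Lemma admissible_ok (E : IPS) (p : E) r : unit p -> r < PI / 4 -> admissible (ballE p r) dE.
Proof.
  intros Hp Hr x y [Hx Dx] [Hy Dy]. unfold dE.
  pose proof (tri E x p y Hx Hp Hy). rewrite (ip_sym E x p) in H. lra.
Qed.

Lemma geodesic_ok (E : IPS) (p : E) r : unit p -> 0 <= r <= PI / 2 -> pi_geodesic (ballE p r) dE.
Proof.
  intros Hp Hr x y [Hx Dx] [Hy Dy] Hd. unfold dE in *.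
  set (L := acos (ip x y)) in *.
  pose proof (acos_bound (ip x y)) as BL. fold L in BL.
  assert (Hk : ip x y = cos L) by (unfold L; rewrite cos_acos; auto; apply unit_bound; auto).
  destruct (geo_props E x y L Hx Hy Hk ltac:(lra)) as [G0 [GL [Gt Gd]]].
  exists (geo x y L). unfold is_geodesic. split; [|split; [|split]]; auto.
  - intros t Ht. destruct (Gt t Ht) as [U [I1 I2]]. split; auto.
    pose proof (cos_ge_0 r ltac:(lra) ltac:(lra)) as cr.
    assert (Cx : cos r <= ip p x) by (apply cos_of_acos_le; auto; try lra; apply unit_bound; auto).
    assert (Cy : cos r <= ip p y) by (apply cos_of_acos_le; auto; try lra; apply unit_bound; auto).
    destruct (coef L t Ht ltac:(lra)) as [C1 [C2 [C3 [Pa Pb]]]].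
    apply acos_le; [apply unit_bound; auto | lra |].
    unfold geo. rewrite ip_lcr.
    assert (Hs : 1 <= ca L t + cb L t).
    { pose proof (COS_bound L). rewrite <- C1, <- C2 in C3.
      set (a := ca L t) in *. set (b := cb L t) in *. set (k := cos L) in *.
      assert (0 <= a * b * (1 - k)) by (apply Rmult_le_pos; [apply Rmult_le_pos|]; lra).
      assert (1 <= (a + b) * (a + b)) by nra. nra. }
    set (a := ca L t) in *. set (b := cb L t) in *.
    assert (0 <= a * (ip p x - cos r)) by (apply Rmult_le_pos; lra).
    assert (0 <= b * (ip p y - cos r)) by (apply Rmult_le_pos; lra).
    nra.
Qed.

Lemma gram_pair (E : IPS) (xa xb : E) (ya yb : R3) :
  unit xa -> unit xb -> S2 ya -> S2 yb -> dS2 ya yb = dE xa xb -> ip xa xb = dot3 ya yb.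
Proof.
  intros Ha Hb Sa Sb H. unfold dS2, dE in H.
  pose proof (unit_bound E xa xb Ha Hb).
  pose proof (unit_bound E3 ya yb Sa Sb). simpl in H1.
  rewrite <- (cos_acos (ip xa xb)), <- (cos_acos (dot3 ya yb)); auto. rewrite H; auto.
Qed.

Lemma side_lemma (E : IPS) (pp : E) r (xi xj : E) g (yi yj : R3) (z : E) (z' : R3) :
  unit pp -> r < PI / 4 ->
  ballE pp r xi -> ballE pp r xj -> is_geodesic (ballE pp r) dE xi xj g ->
  S2 yi -> S2 yj -> dS2 yi yj = dE xi xj ->
  on_side dE xi xj g yi yj z z' ->
  exists a b, z = lc a xi b xj /\ z' = lc (E := E3) a yi b yj /\ unit z /\ S2 z'.
Proof.
  intros Hp Hr Bi Bj [G0 [GL [Gin Gd]]] Si Sj Hd [s [Hs [Hz Hc]]].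
  destruct Hc as [Sz [C1 C2]].
  set (L := dE xi xj) in *.
  assert (HL : L < PI).
  { pose proof (admissible_ok E pp r Hp Hr xi xj Bi Bj). fold L in H. pose proof PI_RGT_0. lra. }
  assert (Bz : ballE pp r z) by (rewrite Hz; apply Gin; lra).
  destruct Bi as [Ui _]. destruct Bj as [Uj _]. destruct Bz as [Uz _].
  assert (Hk : ip xi xj = cos L).
  { unfold L, dE. rewrite cos_acos; auto. apply unit_bound; auto. }
  assert (D1 : dE xi z = s).
  { rewrite <- G0, Hz, Gd by lra. rewrite Rabs_left1 by lra. ring. }
  assert (D2 : dE z xj = L - s).
  { rewrite <- GL at 1. rewrite Hz, Gd by lra. rewrite Rabs_left1 by lra. ring. }
  unfold dE in D1, D2.
  apply acos_eq_iff in D1; [|apply unit_bound; auto|lra].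
  apply acos_eq_iff in D2; [|apply unit_bound; auto|lra].
  unfold dS2 in C1, C2.
  apply acos_eq_iff in C1; [|apply (unit_bound E3); auto|lra].
  apply acos_eq_iff in C2; [|apply (unit_bound E3); auto|lra].
  assert (Hk' : dot3 yi yj = cos L).
  { rewrite <- (gram_pair E xi xj); auto. }
  exists (ca L s), (cb L s). split; [|split; [|split]]; auto.
  - apply side_repr; auto; lra.
  - apply (side_repr E3); auto; lra.
Qed.

Definition idx {A : Type} (a1 a2 a3 : A) (n : nat) : A :=
  match n with 0%nat => a1 | 1%nat => a2 | _ => a3 end.

Lemma cat1_ok (E : IPS) (pp : E) r : unit pp -> 0 <= r < PI / 4 ->
  CAT1_inequality (ballE pp r) dE.
Proof.
  intros Hp Hr x1 x2 x3 g12 g23 g31 y1 y2 y3 X1 X2 X3 G12 G23 G31 _ S1 S2' S3 E12 E23 E31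
    z w z' w' Tz Tw.
  assert (Rep : forall u u', on_triangle dE x1 x2 x3 g12 g23 g31 y1 y2 y3 u u' ->
     exists i j a b, u = lc a (idx x1 x2 x3 i) b (idx x1 x2 x3 j) /\
        u' = lc (E := E3) a (idx y1 y2 y3 i) b (idx y1 y2 y3 j) /\ unit u /\ S2 u').
  { intros u u' [T|[T|T]].
    - destruct (side_lemma E pp r x1 x2 g12 y1 y2 u u') as [a [b H]]; auto; try lra.
      exists 0%nat, 1%nat, a, b; exact H.
    - destruct (side_lemma E pp r x2 x3 g23 y2 y3 u u') as [a [b H]]; auto; try lra.
      exists 1%nat, 2%nat, a, b; exact H.
    - destruct (side_lemma E pp r x3 x1 g31 y3 y1 u u') as [a [b H]]; auto; try lra.
      exists 2%nat, 0%nat, a, b; exact H. }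
  assert (Gram : forall i j, ip (idx x1 x2 x3 i) (idx x1 x2 x3 j) = dot3 (idx y1 y2 y3 i) (idx y1 y2 y3 j)).
  { destruct X1 as [U1 _], X2 as [U2 _], X3 as [U3 _].
    assert (g12' : ip x1 x2 = dot3 y1 y2) by (apply gram_pair; auto).
    assert (g23' : ip x2 x3 = dot3 y2 y3) by (apply gram_pair; auto).
    assert (g31' : ip x3 x1 = dot3 y3 y1) by (apply gram_pair; auto).
    assert (sy : forall a b, dot3 a b = dot3 b a) by (intros; apply (ip_sym E3)).
    intros [|[|i]] [|[|j]]; simpl; unfold unit, S2 in *;
      rewrite ?U1, ?U2, ?U3, ?S1, ?S2', ?S3; auto; try (rewrite ip_sym, sy; auto). }
  destruct (Rep z z' Tz) as [i [j [a [b [Hz [Hz' [Uz Sz]]]]]]].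
  destruct (Rep w w' Tw) as [k [l [c [e [Hw [Hw' [Uw Sw]]]]]]].
  unfold dE, dS2. right. f_equal.
  rewrite Hz, Hw, Hz', Hw'. rewrite !ip_lcl, !ip_lcr.
  change (@ip E3) with dot3. rewrite !(ip_lcl E3), !(ip_lcr E3). simpl. rewrite !Gram. reflexivity.
Qed.

Lemma gD_le (D rho c : R) : 0 < rho < D -> D + rho < PI / 2 -> -1 <= c <= 1 ->
  0 < cos rho * cos D + sin rho * sin D * c <= cos rho ^ 2 + sin rho ^ 2 * c.
Proof.
  intros Hr HD Hc. pose proof PI_RGT_0.
  assert (sr : 0 < sin rho) by (apply sin_gt_0; lra).
  assert (sD : 0 < sin D) by (apply sin_gt_0; lra).
  assert (cp : 0 < cos (D + rho)) by (apply cos_gt_0; lra).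
  assert (c1 : cos (D - rho) <= 1) by apply COS_bound.
  assert (c2 : cos (D + rho) <= cos (2 * rho)).
  { left. apply cos_decreasing_1; lra. }
  rewrite cos_plus in cp, c2. rewrite cos_minus in c1.
  replace (2 * rho) with (rho + rho) in c2 by ring. rewrite cos_plus in c2.
  pose proof (sin_sq rho).
  split.
  - assert (0 <= sin rho * sin D * (c + 1)) by (apply Rmult_le_pos; [apply Rmult_le_pos|]; lra).
    nra.
  - assert (Heq : cos rho ^ 2 + sin rho ^ 2 * c - (cos rho * cos D + sin rho * sin D * c) =
       ((1 + c) / 2) * (1 - (cos D * cos rho + sin D * sin rho)) +
       ((1 - c) / 2) * ((cos rho * cos rho - sin rho * sin rho) - (cos D * cos rho - sin D * sin rho))).
    { field_simplify. nra. }
    assert (0 <= ((1 + c) / 2) * (1 - (cos D * cos rho + sin D * sin rho))) by (apply Rmult_le_pos; lra).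
    assert (0 <= ((1 - c) / 2) * ((cos rho * cos rho - sin rho * sin rho) - (cos D * cos rho - sin D * sin rho)))
      by (apply Rmult_le_pos; lra).
    lra.
Qed.

Lemma final_ineq (D1 D2 rho c : R) : 0 < rho < D1 -> rho < D2 -> D1 + rho < PI / 2 ->
  D2 + rho < PI / 2 -> -1 <= c <= 1 ->
  (cos rho ^ 2 + sin rho ^ 2 * c) ^ 2 >=
  (cos rho * cos D2 + sin rho * sin D2 * c) * (cos rho * cos D1 + sin rho * sin D1 * c).
Proof.
  intros. destruct (gD_le D1 rho c) as [A1 A2]; try lra.
  destruct (gD_le D2 rho c) as [B1 B2]; try lra.
  set (L := cos rho ^ 2 + sin rho ^ 2 * c) in *.
  set (g1 := cos rho * cos D1 + sin rho * sin D1 * c) in *.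
  set (g2 := cos rho * cos D2 + sin rho * sin D2 * c) in *.
  assert (g2 * g1 <= L * g1) by (apply Rmult_le_compat_r; lra).
  assert (L * g1 <= L * L) by (apply Rmult_le_compat_l; lra).
  lra.
Qed.

Lemma notC (E : IPS) (p x : E) : unit p -> unit x -> ~ ballE p (PI / 8) x -> PI / 8 < acos (ip p x).
Proof.
  intros Hp Hx H. destruct (Rlt_dec (PI/8) (acos (ip p x))); auto.
  exfalso; apply H; split; auto; lra.
Qed.

Lemma PB_repr (E : IPS) (p : E) r rho PB x : unit p -> 0 < rho < PI / 8 -> r < PI / 2 ->
  is_metric_projection (ballE p r) (ballE p rho) dE PB ->
  ballE p r x -> ~ ballE p (PI / 8) x ->
  PB x = lc (ca (acos (ip p x)) rho) p (cb (acos (ip p x)) rho) x.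
Proof.
  intros Hp Hrho Hr HPB Bx nC. pose proof PI_RGT_0.
  destruct Bx as [Ux Dx] eqn:EBx.
  pose proof (notC E p x Hp Ux nC) as HD.
  set (D := acos (ip p x)) in *.
  assert (Hk : ip p x = cos D) by (unfold D; rewrite cos_acos; auto; apply unit_bound; auto).
  destruct (geo_props E p x D Hp Ux Hk ltac:(lra)) as [_ [_ [Gt _]]].
  destruct (Gt rho ltac:(lra)) as [Uq [Q1 Q2]].
  set (q := geo p x D rho) in *.
  assert (Bq : ballE p rho q).
  { split; auto. rewrite ip_sym, Q1, acos_cos; lra. }
  destruct (HPB x (conj Ux Dx)) as [[Uz Dz] Hmin].
  specialize (Hmin q Bq). unfold dE in Hmin.
  rewrite (ip_sym E x q), Q2, acos_cos in Hmin by lra.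
  set (z := PB x) in *.
  pose proof (tri E p z x Hp Uz Ux) as T. fold D in T.
  rewrite (ip_sym E z x) in T.
  assert (E1 : acos (ip p z) = rho) by lra.
  assert (E2 : acos (ip x z) = D - rho) by lra.
  apply acos_eq_iff in E1; [|apply unit_bound; auto|lra].
  apply acos_eq_iff in E2; [|apply unit_bound; auto|lra].
  apply side_repr; auto; try lra. rewrite ip_sym; auto.
Qed.

Lemma qfacts (E : IPS) (p x : E) r rho : unit p -> 0 < rho < PI / 8 -> r < PI / 2 ->
  ballE p r x -> ~ ballE p (PI / 8) x ->
  let D := acos (ip p x) in
  let a := ca D rho in let b := cb D rho in
  PI / 8 < D <= r /\ ip p x = cos D /\ 0 < sin D /\
  a + b * cos D = cos rho /\ b * sin D = sin rho /\ unit (lc a p b x) /\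
  ip p (lc a p b x) = cos rho.
Proof.
  intros Hp Hrho Hr [Ux Dx] nC D a b. pose proof PI_RGT_0.
  pose proof (notC E p x Hp Ux nC) as HD. fold D in HD. fold D in Dx.
  assert (Hk : ip p x = cos D) by (unfold D; rewrite cos_acos; auto; apply unit_bound; auto).
  destruct (geo_props E p x D Hp Ux Hk ltac:(lra)) as [_ [_ [Gt _]]].
  destruct (Gt rho ltac:(lra)) as [Uq [Q1 Q2]].
  destruct (coef D rho ltac:(lra) ltac:(lra)) as [C1 _].
  assert (sD : 0 < sin D) by (apply sin_gt_0; lra).
  unfold geo in *. fold a b in Uq, Q1, C1.
  repeat split; auto; try lra.
  - unfold b, cb. destruct (Req_EM_T D 0); [lra|]. field; lra.
  - rewrite ip_sym; auto.
Qed.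

Lemma Tcase (E : IPS) (p : E) r rho PA PB T x : unit p -> 0 < rho < PI / 8 -> r < PI / 2 ->
  is_metric_projection (ballE p r) (fun a => a = p) dE PA ->
  is_metric_projection (ballE p r) (ballE p rho) dE PB ->
  (forall x, ballE p r x -> (ballE p (PI / 8) x -> T x = PA x) /\
          (~ ballE p (PI / 8) x -> T x = PB x)) ->
  ballE p r x ->
  (ballE p (PI / 8) x /\ T x = p) \/
  (~ ballE p (PI / 8) x /\ T x = lc (ca (acos (ip p x)) rho) p (cb (acos (ip p x)) rho) x /\
   ballE p rho (T x)).
Proof.
  intros Hp Hrho Hr HPA HPB HT Bx.
  destruct (HT x Bx) as [T1 T2].
  destruct (classic (ballE p (PI / 8) x)) as [C|C].
  - left; split; auto. rewrite T1 by auto. destruct (HPA x Bx) as [H _]; exact H.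
  - right; split; auto. rewrite T2 by auto. split.
    + apply (PB_repr E p r); auto.
    + destruct (HPB x Bx); auto.
Qed.

Lemma lt_cos8 (E : IPS) (p x : E) : unit p -> unit x -> ~ ballE p (PI / 8) x -> ip p x < cos (PI / 8).
Proof.
  intros Hp Hx nC. pose proof (notC E p x Hp Hx nC). pose proof PI_RGT_0.
  destruct (Rlt_dec (ip p x) (cos (PI/8))); auto.
  assert (acos (ip p x) <= PI/8) by (apply acos_le; [apply unit_bound; auto|lra|lra]). lra.
Qed.

Lemma ge_cosr (E : IPS) (p x : E) r : unit p -> 0 <= r <= PI / 2 -> ballE p r x -> 0 <= ip p x.
Proof.
  intros Hp Hr [Ux Dx]. pose proof (cos_ge_0 r ltac:(lra) ltac:(lra)).
  assert (cos r <= ip p x) by (apply cos_of_acos_le; auto; try lra; apply unit_bound; auto). lra.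
Qed.

Lemma nonspread_main (E : IPS) (p : E) r delta PA PB T : unit p ->
  PI / 8 < r < PI / 4 -> 0 < delta < 1 -> cos (PI / 8) <= (cos (delta * PI / 8))^2 ->
  is_metric_projection (ballE p r) (fun a => a = p) dE PA ->
  is_metric_projection (ballE p r) (ballE p (delta * PI / 8)) dE PB ->
  (forall x, ballE p r x -> (ballE p (PI / 8) x -> T x = PA x) /\
          (~ ballE p (PI / 8) x -> T x = PB x)) ->
  (forall x, ballE p r x -> ballE p r (T x)) /\
  spherically_nonspreading (ballE p r) dE T.
Proof.
  intros Hp Hr Hd Hcos HPA HPB HT. pose proof PI_RGT_0.
  set (rho := delta * PI / 8) in *.
  assert (Hrho : 0 < rho < PI / 8).
  { unfold rho; split. apply Rmult_lt_0_compat; [apply Rmult_lt_0_compat|]; lra.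
    assert (delta * PI < 1 * PI) by (apply Rmult_lt_compat_r; lra). lra. }
  assert (Hpb : ballE p r p).
  { split; auto. rewrite sdist_refl; auto. lra. }
  assert (TC := fun x => Tcase E p r rho PA PB T x Hp Hrho ltac:(lra) HPA HPB HT).
  split.
  - intros x Bx. destruct (TC x Bx) as [[_ ->]|[_ [_ [U D]]]]; auto.
    split; auto; lra.
  - intros x y Bx By. unfold dE.
    assert (UT : forall z, ballE p r z -> unit (T z)).
    { intros z Bz. destruct (TC z Bz) as [[_ ->]|[_ [_ [U _]]]]; auto. }
    pose proof (UT x Bx) as Utx. pose proof (UT y By) as Uty.
    destruct Bx as [Ux Dx0] eqn:EBx. destruct By as [Uy Dy0] eqn:EBy.
    rewrite !cos_acos by (apply unit_bound; auto).
    destruct (TC x Bx) as [[Cx Tx]|[Cx [Tx _]]]; destruct (TC y By) as [[Cy Ty]|[Cy [Ty _]]].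
    + rewrite Tx, Ty. unfold unit in Hp. rewrite Hp.
      pose proof (unit_bound E p x Hp Ux). pose proof (unit_bound E p y Hp Uy). nra.
    +
      destruct (qfacts E p y r rho Hp Hrho ltac:(lra) By Cy) as [D2 [A2 [S2 [F1 [F2 [Uq Iq]]]]]].
      rewrite Tx. rewrite <- Ty in Iq. rewrite Iq.
      pose proof (lt_cos8 E p y Hp Uy Cy). pose proof (ge_cosr E p y r Hp ltac:(lra) By).
      pose proof (unit_bound E (T y) x Uty Ux) as [_ B2].
      assert (ip p y * ip (T y) x <= ip p y * 1) by (apply Rmult_le_compat_l; lra).
      nra.
    + destruct (qfacts E p x r rho Hp Hrho ltac:(lra) Bx Cx) as [D2 [A2 [S2 [F1 [F2 [Uq Iq]]]]]].
      rewrite Ty. rewrite <- Tx in Iq. rewrite ip_sym, Iq.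
      pose proof (lt_cos8 E p x Hp Ux Cx). pose proof (ge_cosr E p x r Hp ltac:(lra) Bx).
      rewrite <- Tx in Uq. pose proof (unit_bound E (T x) y Uq Uy) as [B1 B2].
      destruct (Rle_dec 0 (ip (T x) y)).
      * assert (ip (T x) y * ip p x <= 1 * ip p x) by (apply Rmult_le_compat_r; lra). nra.
      * assert (0 <= - ip (T x) y * ip p x) by (apply Rmult_le_pos; lra). nra.
    + destruct (qfacts E p x r rho Hp Hrho ltac:(lra) Bx Cx) as [D1 [A1 [S1 [F1 [F2 [Uq1 Iq1]]]]]].
      destruct (qfacts E p y r rho Hp Hrho ltac:(lra) By Cy) as [D2 [A2 [S2 [G1 [G2 [Uq2 Iq2]]]]]].
      rewrite Tx, Ty. rewrite !ip_lcl, !ip_lcr.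
      set (d1 := acos (ip p x)) in *. set (d2 := acos (ip p y)) in *.
      set (a1 := ca d1 rho) in *. set (b1 := cb d1 rho) in *.
      set (a2 := ca d2 rho) in *. set (b2 := cb d2 rho) in *.
      unfold unit in Hp. rewrite ?Hp, ?(ip_sym E x p), ?(ip_sym E y p), ?(ip_sym E y x), ?A1, ?A2.
      set (e := ip x y).
      set (c := (e - cos d1 * cos d2) / (sin d1 * sin d2)).
      assert (Hc : -1 <= c <= 1).
      { pose proof (CS E (lc 1 x (- ip p x) p) (lc 1 y (- ip p y) p)) as C.
        rewrite !ip_lcl, !ip_lcr in C. unfold unit in Ux, Uy.
        rewrite ?(ip_sym E x p), ?(ip_sym E y p), ?(ip_sym E y x) in C.
        rewrite Ux, Uy, Hp, A1, A2 in C. fold e in C.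
        pose proof (sin_sq d1). pose proof (sin_sq d2).
        assert (Hs : 0 < sin d1 * sin d2) by (apply Rmult_lt_0_compat; lra).
        assert (Hc2 : c ^ 2 <= 1).
        { unfold c. unfold Rdiv. rewrite Rpow_mult_distr, pow_inv.
          apply Rmult_le_reg_r with ((sin d1 * sin d2)^2). apply pow_lt; lra.
          rewrite Rmult_assoc, Rinv_l by (apply pow_nonzero; lra).
          rewrite Rpow_mult_distr, H0, H1.
          assert (C' : (e - cos d1 * cos d2) ^ 2 <= (1 - cos d1 ^ 2) * (1 - cos d2 ^ 2)).
          { eapply Rle_trans; [|eapply Rle_trans; [exact C|]]; right; ring. }
          lra. }
        split; nra. }
      assert (Ha1 : a1 = cos rho - b1 * cos d1) by lra.
      assert (Ha2 : a2 = cos rho - b2 * cos d2) by lra.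
      assert (Hb1 : b1 = sin rho / sin d1) by (apply Rmult_eq_reg_r with (sin d1); [|lra]; field_simplify; lra).
      assert (Hb2 : b2 = sin rho / sin d2) by (apply Rmult_eq_reg_r with (sin d2); [|lra]; field_simplify; lra).
      assert (Ee : e = cos d1 * cos d2 + c * (sin d1 * sin d2)) by (unfold c; field; split; lra).
      pose proof (sin_sq rho).
      assert (K1 : a1 * (a2 * 1 + b2 * cos d2) + b1 * (a2 * cos d1 + b2 * e) = cos rho ^ 2 + sin rho ^ 2 * c)
        by (rewrite Ha1, Ha2, Hb1, Hb2, Ee; field; split; lra).
      assert (K2 : a1 * cos d2 + b1 * e = cos rho * cos d2 + sin rho * sin d2 * c)
        by (rewrite Ha1, Hb1, Ee; field; lra).
      assert (K3 : a2 * cos d1 + b2 * e = cos rho * cos d1 + sin rho * sin d1 * c)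
        by (rewrite Ha2, Hb2, Ee; field; lra).
      rewrite K1, K2, K3.
      apply final_ineq; lra.
Qed.

Definition nd {E : IPS} (x y : E) : R := sqrt (ip (ad x (op y)) (ad x (op y))).

Lemma ad_op_lc (E : IPS) (x y : E) : ad x (op y) = lc 1 x (-1) y.
Proof. unfold lc; rewrite sc_1, sc_m1; reflexivity. Qed.

Lemma nd_sq (E : IPS) (x y : E) : ip (ad x (op y)) (ad x (op y)) = ip x x - 2 * ip x y + ip y y.
Proof. rewrite ad_op_lc, !ip_lcl, !ip_lcr, (ip_sym E y x); ring. Qed.

Lemma one_minus_cos (t : R) : 0 <= t <= PI -> 2 - 2 * cos t <= t ^ 2.
Proof.
  intros Ht. replace t with (2 * (t / 2)) at 1 by field. rewrite cos_2a_sin.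
  destruct (Req_dec t 0) as [->|Hn].
  - replace (0/2) with 0 by field. rewrite sin_0. lra.
  - assert (sin (t / 2) < t / 2) by (apply sin_lt_x; lra).
    assert (0 <= sin (t / 2)) by (apply sin_ge_0; lra). nra.
Qed.

Lemma nd_le (E : IPS) (x y : E) : unit x -> unit y -> nd x y <= acos (ip x y).
Proof.
  intros Hx Hy. unfold nd. rewrite nd_sq. unfold unit in *. rewrite Hx, Hy.
  pose proof (acos_bound (ip x y)).
  pose proof (one_minus_cos (acos (ip x y)) H). rewrite cos_acos in H0 by (apply unit_bound; auto).
  rewrite <- (sqrt_pow2 (acos (ip x y))) by lra. apply sqrt_le_1_alt. lra.
Qed.

Lemma abs_ip_le (E : IPS) (v w : E) : unit v -> Rabs (ip v w) <= sqrt (ip w w).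
Proof.
  intros Hv. pose proof (CS E v w). unfold unit in Hv. rewrite Hv, Rmult_1_l in H.
  pose proof (ip_pos E w). rewrite <- (sqrt_pow2 (Rabs (ip v w))) by apply Rabs_pos.
  apply sqrt_le_1_alt. rewrite pow2_abs. lra.
Qed.

Lemma myabs (a b : R) : Rabs a <= b -> -b <= a <= b.
Proof. unfold Rabs; destruct (Rcase_abs a); lra. Qed.

Lemma small0 (a : R) : (forall eps, eps > 0 -> Rabs a <= eps) -> a = 0.
Proof.
  intros H. destruct (Req_dec a 0); auto.
  assert (Rabs a > 0) by (apply Rabs_pos_lt; auto).
  specialize (H (Rabs a / 2) ltac:(lra)). lra.
Qed.

Lemma complete_ok (E : IPS) (p : E) r : unit p -> 0 <= r <= PI ->
  (forall u : nat -> E,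
     (forall eps, eps > 0 -> exists N, forall m n, (m >= N)%nat -> (n >= N)%nat -> nd (u m) (u n) < eps) ->
     exists l, forall eps, eps > 0 -> exists N, forall n, (n >= N)%nat -> nd (u n) l < eps) ->
  complete_metric (ballE p r) dE.
Proof.
  intros Hp Hr Hc u Hu Hcau.
  destruct (Hc u) as [l Hl].
  { intros eps He. destruct (Hcau eps He) as [N HN]. exists N. intros m n Hm Hn.
    specialize (HN m n Hm Hn). destruct (Hu m) as [Um _], (Hu n) as [Un _].
    pose proof (nd_le E (u m) (u n) Um Un); unfold dE in HN; lra. }
  assert (Est : forall n, let w := ad (u n) (op l) in
     ip l l = ip w w - 2 * ip (u n) w + 1 /\ ip p l = ip p (u n) - ip p w /\
     ip w w = 2 - 2 * ip (u n) l + (ip l l - 1)).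
  { intros n w. destruct (Hu n) as [Un _]. unfold unit in Un. unfold w. rewrite !nd_sq.
    rewrite !ad_op_lc, !ip_lcr, Un. rewrite ?(ip_sym E l (u n)). split; [ring|split; ring]. }
  assert (Hdel : forall eps, eps > 0 -> exists n, (forall m, (m >= n)%nat -> nd (u m) l < eps)) by exact Hl.
  assert (Ul : ip l l = 1).
  { apply Rminus_diag_uniq. apply small0. intros eps He.
    destruct (Hl (Rmin 1 (eps / 3))) as [N HN]. { apply Rmin_pos; lra. }
    specialize (HN N (Nat.le_refl N)). destruct (Hu N) as [UN _].
    destruct (Est N) as [E1 _]. unfold nd in HN.
    pose proof (abs_ip_le E (u N) (ad (u N) (op l)) UN).
    set (w := ad (u N) (op l)) in *.
    pose proof (sqrt_pos (ip w w)). pose proof (Rmin_l 1 (eps/3)). pose proof (Rmin_r 1 (eps/3)).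
    pose proof (ip_pos E w). pose proof (sqrt_sqrt (ip w w) H3).
    rewrite E1. set (s := sqrt (ip w w)) in *.
    assert (Habs : Rabs (ip w w - 2 * ip (u N) w + 1 - 1) <= s * s + 2 * s).
    { rewrite <- H4. apply Rabs_le.
      apply myabs in H. lra. }
    assert (s * s <= s * 1) by (apply Rmult_le_compat_l; lra). lra. }
  exists l. split.
  - split; auto. apply acos_le; [apply unit_bound; auto; unfold unit; auto | lra |].
    destruct (Hu O) as [_ _].
    apply Rge_le, Rminus_ge, Rle_ge. apply Rnot_lt_le. intro Hneg.
    set (gap := cos r - ip p l) in *.
    destruct (Hl (gap / 2)) as [N HN]. { unfold gap; lra. }
    specialize (HN N (Nat.le_refl N)). destruct (Hu N) as [UN DN].
    destruct (Est N) as [_ [E2 _]]. unfold nd in HN.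
    pose proof (abs_ip_le E p (ad (u N) (op l)) Hp).
    assert (cos r <= ip p (u N)) by (apply cos_of_acos_le; auto; try lra; apply unit_bound; auto).
    apply myabs in H. unfold gap in *. lra.
  - intros eps He. set (e' := Rmin eps (PI / 2)).
    pose proof PI_RGT_0.
    assert (He' : 0 < e' <= eps) by (unfold e'; split; [apply Rmin_pos; lra| apply Rmin_l]).
    assert (He2 : e' <= PI / 2) by apply Rmin_r.
    assert (Hc1 : cos e' < 1) by (rewrite <- cos_0; apply cos_decreasing_1; lra).
    set (eta := sqrt (2 * (1 - cos e'))).
    assert (Heta : 0 < eta) by (apply sqrt_lt_R0; lra).
    destruct (Hl eta Heta) as [N HN]. exists N. intros n Hn.
    specialize (HN n Hn). destruct (Hu n) as [Un _].
    destruct (Est n) as [_ [_ E3]]. rewrite Ul in E3. unfold nd in HN.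
    set (w := ad (u n) (op l)) in *.
    pose proof (ip_pos E w).
    assert (Hw : ip w w < 2 * (1 - cos e')).
    { rewrite <- (sqrt_sqrt (ip w w)) by auto. rewrite <- (sqrt_sqrt (2 * (1 - cos e'))) by lra.
      fold eta. pose proof (sqrt_pos (ip w w)). nra. }
    unfold dE. apply Rlt_le_trans with e'; [|lra].
    apply acos_lt; [apply unit_bound; auto; unfold unit; auto | lra | lra].
Qed.
Theorem mainTheorem2
  (V : Type) (zero : V) (add : V -> V -> V) (opp : V -> V)
  (scal : R -> V -> V) (inner : V -> V -> R)
  (HH : is_real_hilbert_space zero add opp scal inner)
  (r delta : R)
  (Hr : PI / 8 < r < PI / 4)
  (Hdelta : 0 < delta < 1)
  (Hcos : cos (PI / 8) <= (cos (delta * PI / 8))^2)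
  (p : V) (Hp : unit_sphere inner p)
  (PA PB T : V -> V)
  (HPA : is_metric_projection (sph_ball inner p r) (fun a => a = p)
           (sph_dist inner) PA)
  (HPB : is_metric_projection (sph_ball inner p r)
           (sph_ball inner p (delta * PI / 8)) (sph_dist inner) PB)
  (HT : forall x, sph_ball inner p r x ->
          (sph_ball inner p (PI / 8) x -> T x = PA x) /\
          (~ sph_ball inner p (PI / 8) x -> T x = PB x)) :
  let X := sph_ball inner p r in
  let d := sph_dist inner in
  admissible X d /\ complete_metric X d /\ is_CAT1_space X d /\
  (forall x, X x -> X (T x)) /\
  spherically_nonspreading X d T.
Proof.
  intros X d.
  destruct HH as [Hvs [Hip Hcomp]].
  set (EH := mkIPS V zero add opp scal inner Hvs Hip).
  pose proof PI_RGT_0.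
  assert (Hp' : @unit EH p) by exact Hp.
  destruct (nonspread_main EH p r delta PA PB T Hp' Hr Hdelta Hcos HPA HPB HT) as [N1 N2].
  split; [|split; [|split; [|split]]].
  - exact (admissible_ok EH p r Hp' ltac:(lra)).
  - exact (complete_ok EH p r Hp' ltac:(lra) Hcomp).
  - split; [|split].
    + exact (metric_ok EH p r).
    + exact (geodesic_ok EH p r Hp' ltac:(lra)).
    + exact (cat1_ok EH p r Hp' ltac:(lra)).
  - exact N1.
  - exact N2.
Qed.
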